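(* Let $m,n\ge 1$ and let $A\in\{0,1\}^{m\times n}$ have exactly three ones in each row. If $\operatorname{conv}(\mathrm{NPadj}(A))$ is not a line segment (equivalently, $\mathrm{NPadj}(A)$ has more than two points), then there is no finite simple graph $G$ with $\mathrm{NPadj}(A)\le_a \mathrm{Stable}(G)$. In other words, $\operatorname{conv}(\mathrm{NPadj}(A))$ is not affinely equivalent to any face of $\operatorname{conv}(\mathrm{Stable}(G))$, for any graph $G$.
   Context: Polytopes are identified with their vertex sets; every 0/1 set $X$ is the vertex set of $\operatorname{conv}(X)$. **Definition of $\mathrm{NPadj}(A)$.** Let $m,n\ge1$ and let $A\in\{0,1\}^{m\times n}$ have exactly three ones in each row. Index the coordinates of $\mathbb{R}^{3n+3}$ by $y_1,y_2,y_3$ and by $x_j,\bar x_j,x'_j$ for $j\in[n]=\{1,\dots,n\}$. Then $\mathrm{NPadj}(A)$ is the set of vectors in $\{0,1\}^{3n+3}$ satisfying: - $x_j+\bar x_j=1$ for all $j\in[n]$; - $y_1+y_2+x'_j+\bar x_j=2$ for all $j\in[n]$; - for each row of $A$, with ones in columns $i<j<k$, the equation $y_3+x_i+x'_j+x'_k=2$. **Graph polytope.** For a graph $G=(V,E)$, $\mathrm{Stable}(G)=\{x\in\{0,1\}^V : x_u+x_v\le 1 \text{ for every edge } \{u,v\}\in E\}$. **Affine reduction of polytopes.** For finite sets $P,Q$ of 0/1 vectors, $P\le_a Q$ means: there is an affine map $\alpha$ defined on $\operatorname{conv}(P)$, injective there, such that $\alpha(\operatorname{conv}(P))$ is a face (possibly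 improper) of $\operatorname{conv}(Q)$. *)

(* Defs.v *)
From HB Require Import structures.
From mathcomp Require Import all_boot all_order all_algebra.
Set Implicit Arguments. Unset Strict Implicit. Unset Printing Implicit Defensive.
Import Order.TTheory GRing.Theory Num.Theory.

Local Open Scope ring_scope.

Definition conv (R : realFieldType) (T : finType) (X : {set {ffun T -> bool}})
  (v : T -> R) : Prop :=
  exists lam : {ffun T -> bool} -> R,
    (forall p, 0 <= lam p) /\ (forall p, p \notin X -> lam p = 0) /\
    \sum_p lam p = 1 /\
    (forall t, v t = \sum_p lam p * (p t)%:R).

Definition affmap (R : realFieldType) (S T : finType) (M : S -> T -> R)
  (b : T -> R) (x : S -> R) : T -> R :=
  fun t => b t + \sum_s M s t * x s.

Definition is_face (R : realFieldType) (T : finType) (Q : {set {ffun T -> bool}})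
  (F : (T -> R) -> Prop) : Prop :=
  exists (c : T -> R) (delta : R),
    (forall y, conv Q y -> \sum_t c t * y t <= delta) /\
    (forall y, F y <-> (conv Q y /\ \sum_t c t * y t = delta)).

(* P <=_a Q : an affine map, injective on conv(P), mapping conv(P) onto a face
   of conv(Q). *)
Definition aff_red (R : realFieldType) (S T : finType)
  (P : {set {ffun S -> bool}}) (Q : {set {ffun T -> bool}}) : Prop :=
  exists (M : S -> T -> R) (b : T -> R),
    (forall x x', conv P x -> conv P x' ->
        affmap M b x =1 affmap M b x' -> x =1 x') /\
    is_face Q (fun y => exists x, conv P x /\ y =1 affmap M b x).

(* Coordinates of R^{3n+3}: y_1,y_2,y_3, x_j, xbar_j, x'_j (j : 'I_n, 0-based). *)
Definition NPcoord (n : nat) : finType := ('I_3 + ('I_n + ('I_n + 'I_n)))%type.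
Definition cy (n k : nat) : NPcoord n := inl (inord k).   (* k = 0,1,2 : y_1,y_2,y_3 *)
Definition cx (n : nat) (j : 'I_n) : NPcoord n := inr (inl j).
Definition cxb (n : nat) (j : 'I_n) : NPcoord n := inr (inr (inl j)).
Definition cxp (n : nat) (j : 'I_n) : NPcoord n := inr (inr (inr j)).

Definition NPadj (m n : nat) (A : 'M[bool]_(m, n)) : {set {ffun NPcoord n -> bool}} :=
  [set x : {ffun NPcoord n -> bool} |
    [forall j : 'I_n, (x (cx j) : nat) + x (cxb j) == 1]%N &&
    [forall j : 'I_n, (x (cy n 0) : nat) + x (cy n 1) + x (cxp j) + x (cxb j) == 2]%N &&
    [forall r : 'I_m, forall i : 'I_n, forall j : 'I_n, forall k : 'I_n,
       [&& (i < j)%N, (j < k)%N, A r i, A r j & A r k] ==>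
       ((x (cy n 2) : nat) + x (cx i) + x (cxp j) + x (cxp k) == 2)%N]].

Definition Stable (V : finType) (e : rel V) : {set {ffun V -> bool}} :=
  [set x : {ffun V -> bool} | [forall u, forall v, e u v ==> ((x u : nat) + x v <= 1)%N]].

(* Main.v *)
Require Import Defs.
From HB Require Import structures.
From mathcomp Require Import all_boot all_order all_algebra.
From mathcomp Require Import zify.
From mathcomp Require Import lra.
Import Order.TTheory GRing.Theory Num.Theory.
Set Implicit Arguments. Unset Strict Implicit. Unset Printing Implicit Defensive.

Local Open Scope ring_scope.

Section Geo.
Variable R : realFieldType.

Definition rv (T : finType) (p : {ffun T -> bool}) : T -> R := fun t => (p t)%:R.

Lemma conv_pt (T : finType) (X : {set {ffun T -> bool}}) p :
  p \in X -> conv X (rv p).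
Proof.
move=> pX; exists (fun q => (q == p)%:R); split; [|split; [|split]].
- by move=> q; rewrite ler0n.
- by move=> q qX; case: eqP => // E; rewrite E pX in qX.
- rewrite (bigD1 p) //= eqxx big1 ?addr0 // => q /negbTE -> //.
- move=> t; rewrite (bigD1 p) //= eqxx mul1r big1 ?addr0 // => q /negbTE ->.
  by rewrite mul0r.
Qed.

Lemma conv_comb (T I : finType) (X : {set {ffun T -> bool}}) (g : I -> {ffun T -> bool})
   (lam : I -> R) :
  (forall i, g i \in X) -> (forall i, 0 <= lam i) -> \sum_i lam i = 1 ->
  conv X (fun t => \sum_i lam i * (g i t)%:R).
Proof.
move=> gX l0 l1.
exists (fun p => \sum_i lam i * (g i == p)%:R); split; [|split; [|split]].
- by move=> p; apply: sumr_ge0 => i _; rewrite mulr_ge0 ?ler0n.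
- move=> p pX; apply: big1 => i _; case: eqP => [E|]; last by rewrite mulr0.
  by rewrite -E gX in pX.
- rewrite exchange_big /= -[RHS]l1; apply: eq_bigr => i _.
  rewrite -mulr_sumr (bigD1 (g i)) //= eqxx big1 ?addr0 ?mulr1 //.
  by move=> q; rewrite eq_sym => /negbTE ->.
- move=> t; under [RHS]eq_bigr do rewrite mulr_suml.
  rewrite [RHS]exchange_big /=; apply: eq_bigr => i _.
  rewrite (bigD1 (g i)) //= eqxx mulr1 big1 ?addr0 //.
  by move=> q; rewrite eq_sym => /negbTE ->; rewrite mulr0 mul0r.
Qed.

Lemma conv_mid (T : finType) (X : {set {ffun T -> bool}}) (u v : T -> R) :
  conv X u -> conv X v -> conv X (fun t => (u t + v t) / 2).
Proof.
move=> [lu [lu0 [lu1 [lu2 lu3]]]] [lv [lv0 [lv1 [lv2 lv3]]]].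
exists (fun p => (lu p + lv p) / 2); split; [|split; [|split]].
- by move=> p; rewrite mulr_ge0 ?addr_ge0 ?invr_ge0 ?ler0n.
- by move=> p pX; rewrite lu1 // lv1 // addr0 mul0r.
- rewrite -mulr_suml big_split /= lu2 lv2 divff //.
  by rewrite (_ : 1 + 1 = 2%:R) // pnatr_eq0.
- move=> t; rewrite lu3 lv3 -big_split /= mulr_suml; apply: eq_bigr => p _.
  by rewrite [RHS]mulrAC !mulrDl.
Qed.

Lemma conv_01 (T : finType) (X : {set {ffun T -> bool}}) (v : T -> R) t :
  conv X v -> 0 <= v t <= 1.
Proof.
move=> [l [l0 [_ [l1 l2]]]]; rewrite l2; apply/andP; split.
  by apply: sumr_ge0 => p _; rewrite mulr_ge0 ?ler0n.
apply: (@le_trans _ _ (\sum_p l p)); last by rewrite l1.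
apply: ler_sum => p _.
by case: (p t); rewrite ?mulr1 ?mulr0.
Qed.

Lemma extremal (T I : finType) (lam : I -> R) (x : I -> T -> R) (p : {ffun T -> bool}) :
  (forall i, 0 <= lam i) -> \sum_i lam i = 1 ->
  (forall i t, lam i != 0 -> 0 <= x i t <= 1) ->
  (forall t, (p t)%:R = \sum_i lam i * x i t) ->
  forall i, 0 < lam i -> forall t, x i t = (p t)%:R.
Proof.
move=> l0 l1 xb E i li t.
have ln : lam i != 0 by rewrite gt_eqF.
case Pt: (p t); move: (E t); rewrite Pt => Et.
- have H : \sum_j lam j * (1 - x j t) = 0.
    under eq_bigr do rewrite mulrBr mulr1.
    by rewrite sumrB l1 -Et subrr.
  have nn : forall j, true -> 0 <= lam j * (1 - x j t).
    move=> j _; have [->|lj] := eqVneq (lam j) 0; first by rewrite mul0r.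
    by rewrite mulr_ge0 // subr_ge0; case/andP: (xb j t lj).
  have /eqP := psumr_eq0P nn H (i:=i) isT.
  by rewrite mulf_eq0 (negbTE ln) subr_eq0 => /eqP ->.
- have nn : forall j, true -> 0 <= lam j * x j t.
    move=> j _; have [->|lj] := eqVneq (lam j) 0; first by rewrite mul0r.
    by rewrite mulr_ge0 //; case/andP: (xb j t lj).
  have /eqP := psumr_eq0P nn (esym Et) (i:=i) isT.
  by rewrite mulf_eq0 (negbTE ln) => /eqP ->.
Qed.

Lemma aff_comb (S T I : finType) (M : S -> T -> R) (b : T -> R) (lam : I -> R)
   (x : I -> S -> R) t :
  \sum_i lam i = 1 ->
  affmap M b (fun s => \sum_i lam i * x i s) t = \sum_i lam i * affmap M b (x i) t.
Proof.
move=> l1; rewrite /affmap.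
under [RHS]eq_bigr do rewrite mulrDr.
rewrite big_split /= -mulr_suml l1 mul1r; congr (_ + _).
under eq_bigr do rewrite mulr_sumr.
rewrite exchange_big /=; apply: eq_bigr => s _.
rewrite mulr_sumr; apply: eq_bigr => i _.
by rewrite mulrCA.
Qed.

Lemma aff_pair (S T : finType) (M : S -> T -> R) (b : T -> R) (u v u' v' : S -> R) t :
  (forall s, u s + v s = u' s + v' s) ->
  affmap M b u t + affmap M b v t = affmap M b u' t + affmap M b v' t.
Proof.
move=> E; rewrite /affmap addrACA [RHS]addrACA -!big_split /=; congr (_ + _).
by apply: eq_bigr => s _; rewrite -!mulrDr E.
Qed.

Lemma aff_ext (S T : finType) (M : S -> T -> R) (b : T -> R) (u v : S -> R) t :
  u =1 v -> affmap M b u t = affmap M b v t.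
Proof. by move=> E; rewrite /affmap; under eq_bigr do rewrite E. Qed.

End Geo.


Local Open Scope ring_scope.

Section Face.
Variable R : realFieldType.

Lemma exists_pos (I : finType) (lam : I -> R) :
  (forall i, 0 <= lam i) -> \sum_i lam i = 1 -> exists i, 0 < lam i.
Proof.
move=> l0 l1; case: (pickP (fun i => 0 < lam i)) => [i Hi|H]; first by exists i.
move: l1; rewrite big1 => [/eqP|i _]; first by rewrite eq_sym oner_eq0.
by move: (H i) (l0 i); rewrite lt_def /= => /negbT; rewrite negb_and negbK => /orP[/eqP|/negP].
Qed.

Lemma rv_inj (T : finType) (p p' : {ffun T -> bool}) :
  (forall t, rv R p t = rv R p' t) -> p = p'.
Proof.
move=> E; apply/ffunP => t; move: (E t); rewrite /rv => /eqP; rewrite eqr_nat.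
by case: (p t); case: (p' t).
Qed.

Variables (S T : finType) (P : {set {ffun S -> bool}}) (Q : {set {ffun T -> bool}})
  (M : S -> T -> R) (b : T -> R) (c : T -> R) (delta : R).
Hypothesis inj : forall x x', conv P x -> conv P x' ->
        affmap M b x =1 affmap M b x' -> x =1 x'.
Hypothesis valid : forall y, conv Q y -> \sum_t c t * y t <= delta.
Hypothesis face : forall y, (exists x, conv P x /\ y =1 affmap M b x) <->
     (conv Q y /\ \sum_t c t * y t = delta).

Local Notation phi := (affmap M b).

Lemma img_face x : conv P x -> conv Q (phi x) /\ \sum_t c t * phi x t = delta.
Proof. by move=> Px; apply/face; exists x. Qed.

Lemma F1 (y1 y2 z : T -> R) : conv Q y1 -> conv Q y2 ->
  (forall t, y1 t + y2 t = z t + z t) -> \sum_t c t * z t = delta ->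
  \sum_t c t * y1 t = delta.
Proof.
move=> Q1 Q2 E Ez.
have H : \sum_t c t * y1 t + \sum_t c t * y2 t = delta + delta.
  by rewrite -big_split /= -Ez -big_split /=; apply: eq_bigr => t _; rewrite -!mulrDr E.
have := valid Q1; have := valid Q2; lra.
Qed.

Lemma F2 (lam : {ffun T -> bool} -> R) q :
  (forall p, 0 <= lam p) -> (forall p, p \notin Q -> lam p = 0) ->
  \sum_p lam p = 1 ->
  \sum_t c t * (\sum_p lam p * (p t)%:R) = delta ->
  0 < lam q -> \sum_t c t * rv R q t = delta.
Proof.
move=> l0 lQ l1 Ey lq.
have H : \sum_p lam p * (delta - \sum_t c t * rv R p t) = 0.
  under eq_bigr do rewrite mulrBr.
  rewrite sumrB -mulr_suml l1 mul1r -{1}Ey; apply/eqP; rewrite subr_eq0; apply/eqP.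
  under eq_bigr do rewrite mulr_sumr.
  rewrite exchange_big /=; apply: eq_bigr => p _; rewrite mulr_sumr.
  by apply: eq_bigr => t _; rewrite /rv mulrCA.
have nn : forall p, true -> 0 <= lam p * (delta - \sum_t c t * rv R p t).
  move=> p _; case: (boolP (p \in Q)) => pQ; last by rewrite lQ // mul0r.
  by rewrite mulr_ge0 // subr_ge0; apply: valid; apply: conv_pt.
have /eqP := psumr_eq0P nn H (i:=q) isT.
by rewrite mulf_eq0 (negbTE (lt0r_neq0 lq)) subr_eq0 => /eqP.
Qed.

Lemma E2 q : q \in Q -> \sum_t c t * rv R q t = delta ->
  exists2 p, p \in P & forall t, rv R q t = phi (rv R p) t.
Proof.
move=> qQ Eq.
have [x [[mu [m0 [mP [m1 m2]]]] Ex]] : exists x, conv P x /\ rv R q =1 phi x.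
  by apply/face; split => //; apply: conv_pt.
have E : forall t, (q t)%:R = \sum_i mu i * phi (rv R i) t.
  move=> t; rewrite -aff_comb // -/(rv R q t) Ex.
  by apply: aff_ext => s; rewrite m2.
have [i mi] := exists_pos m0 m1.
have iP : i \in P by apply: contraTT mi => /mP ->; rewrite ltxx.
exists i => // t; rewrite [LHS]/rv.
apply/esym/(extremal m0 m1 _ E mi) => j t' mj.
have jP : j \in P by apply: contraNT mj => /mP ->.
by case: (img_face (conv_pt R jP)) => H _; apply: conv_01 H.
Qed.

Lemma E1 p : p \in P -> exists2 q, q \in Q & forall t, rv R q t = phi (rv R p) t.
Proof.
move=> pP.
have [[lam [l0 [lQ [l1 l2]]]] Ec] := img_face (conv_pt R pP).
pose pq q := odflt p [pick p' in P | [forall t, rv R q t == phi (rv R p') t]].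
have pqP : forall q, pq q \in P.
  by move=> q; rewrite /pq; case: pickP => [x /andP[]|] //.
have pqE : forall q, 0 < lam q -> forall t, rv R q t = phi (rv R (pq q)) t.
  move=> q lq; have qQ : q \in Q by apply: contraTT lq => /lQ ->; rewrite ltxx.
  have Ey : \sum_t c t * (\sum_p lam p * (p t)%:R) = delta.
    by rewrite -Ec; apply: eq_bigr => t _; rewrite l2.
  have [p' p'P Hp'] := E2 qQ (F2 l0 lQ l1 Ey lq).
  rewrite /pq; case: pickP => [x /andP[_ /forallP Hx] t|]; first exact/eqP.
  by move/(_ p'); rewrite p'P /=; move/negbT/forallPn => [t /eqP []].
have E : forall t, phi (rv R p) t =
    phi (fun s => \sum_q lam q * (pq q s)%:R) t.
  move=> t; rewrite aff_comb // l2; apply: eq_bigr => q _.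
  have [->|lq] := eqVneq (lam q) 0; first by rewrite !mul0r.
  have lq0 : 0 < lam q by rewrite lt0r lq l0.
  by have := pqE q lq0 t; rewrite /rv => ->.
have E' := inj (conv_pt R pP) (conv_comb pqP l0 l1) E.
have [q lq] := exists_pos l0 l1.
have Hq := extremal (x := fun q s => rv R (pq q) s) l0 l1 _ E'.
exists q; first by apply: contraTT lq => /lQ ->; rewrite ltxx.
move=> t; rewrite pqE //; apply: aff_ext => s; apply: Hq => //.
by move=> i t' _; rewrite /rv; case: (pq i t'); rewrite ?ler01 ?lexx.
Qed.

End Face.


Close Scope ring_scope.

Lemma klein (T : finType) (f g : T -> T) (W : {set T}) :
  involutive f -> involutive g -> (forall x, f (g x) = g (f x)) ->
  (forall x, x \in W -> f x \in W) -> (forall x, x \in W -> g x \in W) ->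
  (forall x, x \in W -> f x != x) -> (forall x, x \in W -> g x != x) ->
  (forall x, x \in W -> f (g x) != x) -> (4 %| #|W|)%N.
Proof.
move=> fK gK fg Wf Wg nf ng nfg.
have [k] := ubnP #|W|; elim: k W Wf Wg nf ng nfg => // k IH W Wf Wg nf ng nfg Wk.
have [W0|[x xW]] := set_0Vmem W; first by rewrite W0 cards0.
pose O := x |: (f x |: (g x |: [set f (g x)])).
have OW : O \subset W.
  apply/subsetP => y; rewrite !inE => /orP[/eqP->|/orP[/eqP->|/orP[/eqP->|/eqP->]]] //.
  + exact: Wf.
  + exact: Wg.
  + by apply: Wf; apply: Wg.
have Of1 : forall y, y \in O -> f y \in O.
  move=> y; rewrite !inE => /orP[/eqP->|/orP[/eqP->|/orP[/eqP->|/eqP->]]].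
  + by rewrite eqxx !orbT.
  + by rewrite fK eqxx.
  + by rewrite eqxx !orbT.
  + by rewrite fK eqxx !orbT.
have Og1 : forall y, y \in O -> g y \in O.
  move=> y; rewrite !inE => /orP[/eqP->|/orP[/eqP->|/orP[/eqP->|/eqP->]]].
  + by rewrite eqxx !orbT.
  + by rewrite -fg eqxx !orbT.
  + by rewrite gK eqxx.
  + by rewrite fg gK eqxx !orbT.
have Of : forall y, (f y \in O) = (y \in O).
  by move=> y; apply/idP/idP => [/Of1|/Of1 //]; rewrite fK.
have Og : forall y, (g y \in O) = (y \in O).
  by move=> y; apply/idP/idP => [/Og1|/Og1 //]; rewrite gK.
have cO : #|O| = 4%N.
  have h1 := nf x xW; have h2 := ng x xW; have h3 := nfg x xW.
  have h4 : f x != g x.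
    by apply: contra h3 => /eqP E; rewrite -E fK.
  have h5 : f x != f (g x) by rewrite (inj_eq (can_inj fK)) eq_sym.
  have h6 : g x != f (g x) by rewrite eq_sym; apply: nf; apply: Wg.
  rewrite !cardsU1 cards1 !inE.
  by rewrite !(eq_sym x) (negbTE h1) (negbTE h2) (negbTE h3) (negbTE h4) (negbTE h5) (negbTE h6).
have cW : #|W| = (#|W :\: O| + 4)%N.
  by rewrite cardsD (setIidPr OW) cO subnK // -cO subset_leq_card.
rewrite cW dvdn_addl //; apply: IH.
- by move=> y; rewrite !in_setD Of => /andP[-> /Wf ->].
- by move=> y; rewrite !in_setD Og => /andP[-> /Wg ->].
- by move=> y; rewrite inE => /andP[_ /nf].
- by move=> y; rewrite inE => /andP[_ /ng].
- by move=> y; rewrite inE => /andP[_ /nfg].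
- by move: Wk; rewrite cW; lia.
Qed.

Definition condb (a b u : bool) := ((a && b) ==> u) && (u ==> (a || b)).

Lemma bool_core (ap aq bp bq up uq vp vq wp wq : bool) :
  (ap + aq <= 1)%N -> (bp + bq <= 1)%N ->
  (up + uq <= 1)%N -> ((up (+) ap (+) bp) + (uq (+) aq (+) bq) <= 1)%N ->
  condb ap bp up -> condb aq bq uq ->
  (vp + vq <= 1)%N -> ((vp (+) ap (+) bp) + (vq (+) aq (+) bq) <= 1)%N ->
  condb ap bp vp -> condb aq bq vq ->
  (wp + wq <= 1)%N -> ((wp (+) ap (+) bp) + (wq (+) aq (+) bq) <= 1)%N ->
  condb ap bp wp -> condb aq bq wq ->
  ((up (+) vp (+) wp) + (uq (+) vq (+) wq) <= 1)%N &&
  ((up (+) vp (+) wp (+) ap (+) bp) + (uq (+) vq (+) wq (+) aq (+) bq) <= 1)%N.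
Proof. by move: ap aq bp bq up uq vp vq wp wq; do 10!case. Qed.

Lemma bool_cond (a b u v w : bool) :
  condb a b u -> condb a b v -> condb a b w -> condb a b (u (+) v (+) w).
Proof. by move: a b u v w; do 5!case. Qed.

Section XorW.
Variables (V : finType) (e : rel V) (A B : {ffun V -> bool}).

Definition xorv (u d : {ffun V -> bool}) : {ffun V -> bool} := [ffun t => u t (+) d t].

Definition inW (u : {ffun V -> bool}) : bool :=
  [&& u \in Stable e, xorv (xorv u A) B \in Stable e & [forall t, condb (A t) (B t) (u t)]].

Lemma stableP (x : {ffun V -> bool}) :
  reflect (forall p q, e p q -> (x p + x q <= 1)%N) (x \in Stable e).
Proof.
rewrite inE; apply: (iffP forallP) => [H p q epq|H p].
  by have /forallP/(_ q)/implyP := H p; apply.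
by apply/forallP => q; apply/implyP; apply: H.
Qed.

Lemma xor3_closed u v w : A \in Stable e -> B \in Stable e ->
  inW u -> inW v -> inW w -> inW (xorv (xorv u v) w).
Proof.
move=> /stableP SA /stableP SB.
move=> /and3P[/stableP Su /stableP Su' /forallP Cu].
move=> /and3P[/stableP Sv /stableP Sv' /forallP Cv].
move=> /and3P[/stableP Sw /stableP Sw' /forallP Cw].
have {}Su' : forall p q, e p q -> (u p (+) A p (+) B p + (u q (+) A q (+) B q) <= 1)%N.
  by move=> p q /Su'; rewrite !ffunE.
have {}Sv' : forall p q, e p q -> (v p (+) A p (+) B p + (v q (+) A q (+) B q) <= 1)%N.
  by move=> p q /Sv'; rewrite !ffunE.
have {}Sw' : forall p q, e p q -> (w p (+) A p (+) B p + (w q (+) A q (+) B q) <= 1)%N.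
  by move=> p q /Sw'; rewrite !ffunE.
have H : forall p q, e p q -> _ := fun p q epq =>
  bool_core (SA p q epq) (SB p q epq)
   (Su p q epq) (Su' p q epq) (Cu p) (Cu q)
   (Sv p q epq) (Sv' p q epq) (Cv p) (Cv q)
   (Sw p q epq) (Sw' p q epq) (Cw p) (Cw q).
apply/and3P; split.
- apply/stableP => p q epq; move: (H p q epq); rewrite !ffunE.
  by case/andP.
- apply/stableP => p q epq; move: (H p q epq); rewrite !ffunE.
  by case/andP.
- by apply/forallP => t; rewrite !ffunE; apply: bool_cond.
Qed.
End XorW.


Section NP.
Variables (m n : nat) (A : 'M[bool]_(m, n)).
Local Notation X := {ffun NPcoord n -> bool}.

Lemma NPadjP (x : X) :
  reflect [/\ forall j, (x (cx j) + x (cxb j) = 1)%N,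
              forall j, (x (cy n 0) + x (cy n 1) + x (cxp j) + x (cxb j) = 2)%N &
              forall (r : 'I_m) (i j k : 'I_n), (i < j)%N -> (j < k)%N -> A r i -> A r j -> A r k ->
                 (x (cy n 2) + x (cx i) + x (cxp j) + x (cxp k) = 2)%N]
          (x \in NPadj A).
Proof.
rewrite inE; apply: (iffP idP).
  case/andP => [/andP[/forallP H1 /forallP H2] /forallP H3]; split.
  - by move=> j; apply/eqP; apply: H1.
  - by move=> j; apply/eqP; apply: H2.
  - move=> r i j k ij jk Ai Aj Ak; apply/eqP.
    have := forallP (forallP (forallP (H3 r) i) j) k.
    by rewrite ij jk Ai Aj Ak.
case=> H1 H2 H3; apply/andP; split; first (apply/andP; split).
- by apply/forallP => j; rewrite H1.
- by apply/forallP => j; rewrite H2.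
- apply/forallP => r; apply/forallP => i; apply/forallP => j; apply/forallP => k.
  apply/implyP => /and5P[ij jk Ai Aj Ak]; by rewrite (H3 r i j k ij jk Ai Aj Ak).
Qed.

Definition compl (x : X) : X := [ffun t => ~~ x t].
Definition swp (x : X) : X := [ffun t => if t == cy n 0 then x (cy n 1)
   else if t == cy n 1 then x (cy n 0) else x t].
Definition a0 : X := [ffun t => match t with inl _ => false | inr (inl _) => false
   | inr (inr _) => true end].

Lemma e10 : (cy n 1 == cy n 0) = false.
Proof. by apply/eqP => -[] /(congr1 val); rewrite /= !inordK. Qed.
Lemma e20 : (cy n 2 == cy n 0) = false.
Proof. by apply/eqP => -[] /(congr1 val); rewrite /= !inordK. Qed.
Lemma e21 : (cy n 2 == cy n 1) = false.
Proof. by apply/eqP => -[] /(congr1 val); rewrite /= !inordK. Qed.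

Lemma complK : involutive compl.
Proof. by move=> x; apply/ffunP => t; rewrite !ffunE negbK. Qed.

Lemma swpK : involutive swp.
Proof.
move=> x; apply/ffunP => t; rewrite !ffunE eqxx e10 eqxx.
by case: eqP => [->|_] //; case: eqP => [->|_].
Qed.

Lemma swp_compl x : compl (swp x) = swp (compl x).
Proof. by apply/ffunP => t; rewrite !ffunE; case: eqP => _ //; case: eqP. Qed.

Lemma nb (a : bool) : ((~~ a) : nat) = (1 - a)%N.
Proof. by case: a. Qed.

Lemma compl_in x : x \in NPadj A -> compl x \in NPadj A.
Proof.
case/NPadjP => H1 H2 H3; apply/NPadjP; split.
- by move=> j; rewrite !ffunE; move: (H1 j); case: (x _); case: (x _).
- by move=> j; rewrite !ffunE; move: (H2 j); case: (x _); case: (x _); case: (x _); case: (x _).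
- move=> r i j k ij jk Ai Aj Ak; rewrite !ffunE; move: (H3 r i j k ij jk Ai Aj Ak).
  by case: (x _); case: (x _); case: (x _); case: (x _).
Qed.

Lemma swp_in x : x \in NPadj A -> swp x \in NPadj A.
Proof.
case/NPadjP => H1 H2 H3; apply/NPadjP; split.
- by move=> j; rewrite !ffunE /=.
- by move=> j; rewrite !ffunE /= eqxx e10 eqxx (addnC (x (cy n 1))); apply: H2.
- move=> r i j k ij jk Ai Aj Ak; rewrite !ffunE /= e20 e21.
  exact: (H3 r i j k ij jk Ai Aj Ak).
Qed.

Lemma ext_np (x y : X) : (forall k, (k < 3)%N -> x (cy n k) = y (cy n k)) ->
  (forall j, x (cx j) = y (cx j)) -> (forall j, x (cxb j) = y (cxb j)) ->
  (forall j, x (cxp j) = y (cxp j)) -> x = y.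
Proof.
move=> Hy Hx Hxb Hxp; apply/ffunP => -[i3|[j|[j|j]]]; last 3 first.
- exact: Hx.
- exact: Hxb.
- exact: Hxp.
by have := Hy (val i3) (ltn_ord i3); rewrite /cy inord_val.
Qed.

Lemma a0_in : a0 \in NPadj A.
Proof. by apply/NPadjP; split => *; rewrite !ffunE. Qed.

Lemma row3 r : #|[set j | A r j]| = 3%N ->
  exists i j k : 'I_n, [/\ (i < j)%N, (j < k)%N, A r i, A r j & A r k].
Proof.
move=> c3; have : (2 < #|[set j | A r j]|)%N by rewrite c3.
case/card_gt2P => x [y [z [[]]]]; rewrite !inE => Ax Ay Az [nxy nyz nzx].
have Hn : forall i j k : 'I_n, (i < j)%N -> (j < k)%N -> A r i -> A r j -> A r k ->
  exists i j k : 'I_n, [/\ (i < j)%N, (j < k)%N, A r i, A r j & A r k].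
  by move=> i j k *; exists i, j, k.
move: nxy nyz nzx; rewrite -!val_eqE /= => nxy nyz nzx.
case: (ltngtP x y) => hxy; last by rewrite hxy eqxx in nxy.
all: case: (ltngtP y z) => hyz; last by rewrite hyz eqxx in nyz.
all: case: (ltngtP x z) => hxz; last by rewrite hxz eqxx in nzx.
all: solve [ apply: (Hn x y z) => //; lia | apply: (Hn x z y) => //; lia
           | apply: (Hn y x z) => //; lia | apply: (Hn y z x) => //; lia
           | apply: (Hn z x y) => //; lia | apply: (Hn z y x) => //; lia | lia ].
Qed.

Hypothesis m0 : (0 < m)%N.
Hypothesis rows : forall r : 'I_m, #|[set j | A r j]| = 3%N.

Lemma swp_fix x : x \in NPadj A -> swp x = x -> x = a0 \/ x = compl a0.
Proof.
case/NPadjP => H1 H2 H3 Hs.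
have Hy : x (cy n 1) = x (cy n 0).
  by have := congr1 (fun f : X => f (cy n 0)) Hs; rewrite /= ffunE eqxx.
have [i [j [k [ij jk Ai Aj Ak]]]] := row3 (rows (Ordinal m0)).
have R3 := H3 _ _ _ _ ij jk Ai Aj Ak.
case E0: (x (cy n 0)); [right|left]; apply: ext_np => [kk|jj|jj|jj].
all: rewrite ?ffunE /=.
all: try (move: (H2 jj) (H1 jj); rewrite Hy E0; case: (x (cxp jj)); case: (x (cxb jj));
          case: (x (cx jj)) => //).
all: move: (H2 j) (H1 i) (H2 k); rewrite Hy E0 => h2j h1i h2k.
all: case: kk => [|[|[|//]]] _ //; rewrite ?Hy ?E0 //.
all: move: R3 h2j h1i h2k; case: (x (cy n 2)); case: (x (cx i)); case: (x (cxp j));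
     case: (x (cxp k)); case: (x (cxb j)); case: (x (cxb k)) => //.
Qed.

End NP.


Lemma bsum (R : realFieldType) (u w a b : bool) :
  ((u : nat)%:R + (w : nat)%:R = (a : nat)%:R + (b : nat)%:R :> R)%R ->
  w = u (+) a (+) b /\ condb a b u.
Proof. by move/eqP; rewrite -!GRing.natrD eqr_nat; case: u; case: w; case: a; case: b. Qed.

Lemma bsum' (R : realFieldType) (u a b : bool) : condb a b u ->
  ((u : nat)%:R + ((u (+) a (+) b) : nat)%:R = (a : nat)%:R + (b : nat)%:R :> R)%R.
Proof. by move=> Hc; apply/eqP; rewrite -!GRing.natrD eqr_nat; move: Hc; case: u; case: a; case: b. Qed.

Lemma xor2K (V : finType) (u a b : {ffun V -> bool}) :
  xorv (xorv (xorv (xorv u a) b) a) b = u.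
Proof. by apply/ffunP => t; rewrite !ffunE; case: (u t); case: (a t); case: (b t). Qed.

Lemma xor_comm (V : finType) (u a b c d : {ffun V -> bool}) :
  xorv (xorv (xorv (xorv u a) b) c) d = xorv (xorv (xorv (xorv u c) d) a) b.
Proof.
by apply/ffunP => t; rewrite !ffunE; case: (u t); case: (a t); case: (b t); case: (c t); case: (d t).
Qed.

Lemma xor_fix (V : finType) (u a b : {ffun V -> bool}) :
  xorv (xorv u a) b = u -> a = b.
Proof.
move=> E; apply/ffunP => t; have := congr1 (fun f : {ffun V -> bool} => f t) E.
by rewrite /= !ffunE; case: (u t); case: (a t); case: (b t).
Qed.

Lemma xor_fix2 (V : finType) (u a b c : {ffun V -> bool}) :
  xorv (xorv (xorv (xorv u a) c) a) b = u -> c = b.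
Proof.
move=> E; apply/ffunP => t; have := congr1 (fun f : {ffun V -> bool} => f t) E.
by rewrite /= !ffunE; case: (u t); case: (a t); case: (b t); case: (c t).
Qed.

Theorem theorem2 (R : realFieldType) (m n : nat) (A : 'M[bool]_(m, n)) :
  (0 < m)%N -> (0 < n)%N ->
  (forall r : 'I_m, #|[set j | A r j]| = 3%N) ->
  (2 < #|NPadj A|)%N ->
  forall (V : finType) (e : rel V), irreflexive e -> symmetric e ->
  ~ aff_red R (NPadj A) (Stable e).
Proof.
move=> m0 n0 rows P2 V e _ _ [M [b [inj [c [delta [valid face]]]]]].
set P := NPadj A in P2 inj face *.
set Q := Stable e in valid face *.
pose h p := odflt [ffun _ => false]
   [pick q in Q | [forall t, rv R q t == affmap M b (rv R p) t]].
have hP : forall p, p \in P -> h p \in Q /\ forall t, rv R (h p) t = affmap M b (rv R p) t.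
  move=> p pP; have [q qQ Hq] := E1 inj valid face pP.
  rewrite /h; case: pickP => [x /andP[xQ /forallP Hx]|]; first by split => // t; apply/eqP.
  by move/(_ q); rewrite qQ /=; move/negbT/forallPn => [t /eqP []].
have hinj : {in P &, injective h}.
  move=> p p' pP p'P E; apply: (rv_inj (R := R)).
  apply: (inj _ _ (conv_pt R pP) (conv_pt R p'P)) => t.
  by rewrite -(proj2 (hP _ pP)) E (proj2 (hP _ p'P)).
have [p0 p0P] : exists p0, p0 \in P.
  by apply/card_gt0P; apply: leq_trans P2.
have cp0P : compl p0 \in P by apply: compl_in.
pose AA := h p0; pose BB := h (compl p0).
have K : forall p, p \in P -> forall t,
    (rv R (h p) t + rv R (h (compl p)) t = rv R AA t + rv R BB t)%R.
  move=> p pP t; rewrite (proj2 (hP _ pP)) (proj2 (hP _ (compl_in pP))).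
  rewrite (proj2 (hP _ p0P)) (proj2 (hP _ cp0P)); apply: aff_pair => s.
  by rewrite /rv !ffunE; case: (p s); case: (p0 s); rewrite /= ?addr0 ?add0r.
pose W := [set u | inW e AA BB u].
have WE : W = h @: P.
  apply/setP => u; apply/idP/idP.
  - rewrite inE => /and3P[uQ ubQ /forallP Cu].
    pose half := fun s => ((rv R p0 s + rv R (compl p0) s) / 2)%R.
    have hc : conv P half by apply: conv_mid; apply: conv_pt.
    have [_ hd] := img_face face hc.
    have Esum : forall t, (rv R u t + rv R (xorv (xorv u AA) BB) t =
                 affmap M b half t + affmap M b half t)%R.
      move=> t; rewrite /rv !ffunE bsum' // -/(rv R u t).
      rewrite -/(rv R AA t) -/(rv R BB t) (proj2 (hP _ p0P)) (proj2 (hP _ cp0P)).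
      by apply: aff_pair => s; rewrite /half -splitr.
    have cu := F1 valid (conv_pt R uQ) (conv_pt R ubQ) Esum hd.
    have [p pP Hp] := E2 face uQ cu.
    apply/imsetP; exists p => //; apply: (rv_inj (R := R)) => t.
    by rewrite Hp (proj2 (hP _ pP)).
  - case/imsetP => p pP ->; rewrite inE; apply/and3P; split.
    + exact: (proj1 (hP _ pP)).
    + suff -> : xorv (xorv (h p) AA) BB = h (compl p).
        exact: (proj1 (hP _ (compl_in pP))).
      apply/ffunP => t; rewrite !ffunE.
      by have [-> _] := bsum (K p pP t).
    + by apply/forallP => t; have [_ ->] := bsum (K p pP t).
have cW : #|W| = #|P| by rewrite WE card_in_imset.
have AW : AA \in W by rewrite WE imset_f.
have BW : BB \in W by rewrite WE imset_f.
have AB : AA != BB.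
  apply/negP => /eqP /(hinj _ _ p0P cp0P) /(congr1 (fun f : {ffun _ -> bool} => f (cy n 0))).
  by rewrite /= ffunE; case: (p0 _).
have [P0 [P0W nA nB]] : exists P0, [/\ P0 \in W, P0 != AA & P0 != BB].
  have : (0 < #|W :\: [set AA; BB]|)%N.
    rewrite cardsD; have : (#|W :&: [set AA; BB]| <= 2)%N.
      by apply: leq_trans (subset_leq_card (subsetIr _ _)) _; rewrite cards2 ltnS leq_b1.
    by rewrite cW; move: P2; clear; lia.
  case/card_gt0P => x; rewrite in_setD in_set2 negb_or => /andP[/andP[xA xB] xW].
  by exists x.
have AQ := proj1 (hP _ p0P).
have BQ := proj1 (hP _ cp0P).
have AW' : inW e AA BB AA by move: AW; rewrite inE.
have BW' : inW e AA BB BB by move: BW; rewrite inE.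
have P0W' : inW e AA BB P0 by move: P0W; rewrite inE.
have W4 : (4 %| #|W|)%N.
  apply: (klein (f := fun u => xorv (xorv u AA) BB) (g := fun u => xorv (xorv u AA) P0)).
  - by move=> u; rewrite xor2K.
  - by move=> u; rewrite xor2K.
  - by move=> u; rewrite xor_comm.
  - by move=> u; rewrite !inE => uW; apply: xor3_closed.
  - by move=> u; rewrite !inE => uW; apply: xor3_closed.
  - move=> u _; apply/negP => /eqP /xor_fix E.
    by rewrite E eqxx in AB.
  - move=> u _; apply/negP => /eqP /xor_fix E.
    by rewrite E eqxx in nA.
  - move=> u _; apply/negP => /eqP /xor_fix2 E.
    by rewrite E eqxx in nB.
pose B0 := [set x : {ffun NPcoord n -> bool} | swp x != x].
have P4 : (4 %| #|P :&: B0|)%N.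
  apply: (klein (f := @compl n) (g := @swp n)).
  - exact: complK.
  - exact: swpK.
  - by move=> x; rewrite swp_compl.
  - move=> x; rewrite !in_setI ![_ \in B0]inE => /andP[xP sx]; apply/andP; split; first exact: compl_in.
    by rewrite -swp_compl; rewrite (inj_eq (can_inj (@complK n))).
  - move=> x; rewrite !in_setI ![_ \in B0]inE => /andP[xP sx]; apply/andP; split; first exact: swp_in.
    by rewrite swpK eq_sym.
  - move=> x _; apply/negP => /eqP /(congr1 (fun f : {ffun _ -> bool} => f (cy n 0))).
    by rewrite /= ffunE; case: (x _).
  - by move=> x; rewrite in_setI [_ \in B0]inE => /andP[].
  - move=> x _; apply/negP => /eqP /(congr1 (fun f : {ffun _ -> bool} => f (cx (Ordinal n0)))).
    by rewrite /= !ffunE /=; case: (x _).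
have swpa0 : swp (a0 n) = (a0 n).
  apply/ffunP => t; rewrite !ffunE; case: eqP => [->|_]; first by [].
  by case: eqP => [->|_].
have a0c : (a0 n) != compl (a0 n).
  apply/negP => /eqP /(congr1 (fun f : {ffun _ -> bool} => f (cy n 0))).
  by rewrite /= !ffunE.
have Pfix : P :\: B0 = [set (a0 n); compl (a0 n)].
  apply/setP => x; rewrite in_setD in_set2 [_ \in B0]inE negbK; apply/idP/idP.
  - case/andP => /eqP sx xP.
    by case: (swp_fix m0 rows xP sx) => ->; rewrite eqxx ?orbT.
  - case/orP => /eqP ->; first by rewrite swpa0 eqxx; exact: a0_in.
    by rewrite -swp_compl swpa0 eqxx; apply: compl_in; exact: a0_in.
have cP : #|P| = (#|P :&: B0| + 2)%N by rewrite -(cardsID B0 P) Pfix cards2 a0c.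
by move: W4; rewrite cW cP (dvdn_addr 2 P4).
Qed.
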